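(* Let $f(X)=a_kX^k+\cdots+a_0\in\mathbb{Z}[X]$ be a nonconstant polynomial of degree $k\ge1$ with roots $\alpha_1,\dots,\alpha_k$ (with multiplicity) in an algebraic closure of $\mathbb{Q}$, and define $$\widetilde{f}(X):=a_k^{2k-2}\prod_{\substack{1\leq i,j\leq k\\ i\neq j}}\bigl(X-(\alpha_i-\alpha_j)\bigr).$$ Then $f$ and $\widetilde{f}$ have the same Galois group over $\mathbb{Q}$. *)

(* Defs.v *)
From HB Require Import structures.
From mathcomp Require Import all_boot all_order all_algebra all_fingroup all_field.
Set Implicit Arguments. Unset Strict Implicit. Unset Printing Implicit Defensive.
Import GRing.Theory Num.Theory.
Local Open Scope ring_scope.

Definition polyL (L : splittingFieldType rat) (f : {poly int}) : {poly L} :=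
  map_poly (fun z : int => z%:~R) f.

(* f~(X) = a_k^(2k-2) * prod_{i <> j} (X - (alpha_i - alpha_j)), where
   alpha : 'I_k -> L lists the roots of f with multiplicity. *)
Definition ftilde (L : splittingFieldType rat) (f : {poly int})
    (alpha : 'I_(size f).-1 -> L) : {poly L} :=
  ((lead_coef f)%:~R ^+ (2 * (size f).-1 - 2)) *:
    \prod_(i < (size f).-1) \prod_(j < (size f).-1 | j != i)
       ('X - (alpha i - alpha j)%:P).

(* Main.v *)
Require Import Defs.
From HB Require Import structures.
From mathcomp Require Import all_boot all_order all_algebra all_fingroup all_field.
From mathcomp Require Import ring.
Import GRing.Theory Num.Theory.
Local Open Scope ring_scope.

Section Aux.
Variable L : splittingFieldType rat.

Lemma root_prodP (I : finType) (P : pred I) (F : I -> {poly L}) x :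
  root (\prod_(i | P i) F i) x = [exists i, P i && root (F i) x].
Proof.
apply/idP/existsP => [|[i /andP[Pi ri]]].
  elim/big_rec: _ => [|i p Pi IH]; first by rewrite rootE hornerC oner_eq0.
  by rewrite rootM => /orP[r|/IH//]; exists i; rewrite Pi r.
by rewrite (bigD1 i) //= rootM ri.
Qed.

Lemma coef_prod_sum (s : seq L) : (0 < size s)%N ->
  (\prod_(z <- s) ('X - z%:P))`_(size s).-1 = - \sum_(z <- s) z.
Proof.
elim: s => [//|x s IH] _.
rewrite !big_cons /=.
case: s IH => [|y s] IH.
  rewrite !big_nil mulr1 addr0 coefB coefX coefC /=; ring.
rewrite mulrBl coefB coefXM /= coefCM.
have mon := monic_prod_XsubC (y :: s) predT id.
have sz := size_prod_XsubC (y :: s) id.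
move: mon; rewrite monicE /lead_coef sz /= => /eqP ->.
rewrite IH // mulr1 opprD addrC.
by [].
Qed.

Lemma intr_alg (z : int) : (z%:~R : L) = (z%:~R : rat)%:A.
Proof. by rewrite scaler_int. Qed.

Lemma intr_neq0 (z : int) : z != 0 -> (z%:~R : L) != 0.
Proof.
move=> nz; rewrite intr_alg scaler_eq0 oner_eq0 orbF.
by rewrite intr_eq0.
Qed.
End Aux.

Theorem lemma2p1 (L : splittingFieldType rat) (f : {poly int})
    (alpha : 'I_(size f).-1 -> L) :
  (1 < size f)%N ->
  polyL L f = (lead_coef f)%:~R *: \prod_(i < (size f).-1) ('X - (alpha i)%:P) ->
  forall E Et : {subfield L},
    splittingFieldFor 1%VS (polyL L f) E ->
    splittingFieldFor 1%VS (ftilde alpha) Et ->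
    ('Gal(E / 1%AS) \isog 'Gal(Et / 1%AS))%g.
Proof.
move=> Hs Hf E Et [rs Hrs HE] [rs' Hrs' HEt].
set k := (size f).-1 in alpha Hf Hrs' HEt *.
have k0 : (0 < k)%N by rewrite /k -subn1 subn_gt0.
have a0 : lead_coef f != 0 by rewrite lead_coef_eq0 -size_poly_gt0 (ltn_trans _ Hs).
have aL0 := @intr_neq0 L _ a0.
have rootf z : root (polyL L f) z = [exists i, z == alpha i].
  by rewrite Hf rootZ // root_prodP; apply/eq_existsb => i; rewrite root_XsubC.
have rootft z : root (ftilde alpha) z =
    [exists i, exists j, (j != i) && (z == alpha i - alpha j)].
  rewrite /ftilde rootZ ?expf_neq0 // root_prodP; apply/eq_existsb => i /=.
  by rewrite root_prodP; apply/eq_existsb => j; rewrite root_XsubC.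
have inrs z : (z \in rs) = [exists i, z == alpha i].
  by rewrite -root_prod_XsubC -(eqp_root Hrs).
have inrs' z : (z \in rs') =
    [exists i, exists j, (j != i) && (z == alpha i - alpha j)].
  by rewrite -root_prod_XsubC -(eqp_root Hrs').
have alE i : alpha i \in E.
  by rewrite -HE seqv_sub_adjoin // inrs; apply/existsP; exists i.
have alEt i : alpha i \in Et.
  set S := \sum_(j < k) alpha j.
  have S1 : S \in 1%VS.
    have := @coef_prod_sum L [seq alpha j | j <- enum 'I_k].
    rewrite size_map size_enum_ord !big_map -enumT !big_enum /= => /(_ k0) HS.
    have := congr1 (fun p : {poly L} => p`_k.-1) Hf.
    rewrite /= coefZ HS /polyL coef_map_id0 ?mulr0z // => Hc.
    have -> : S = - ((f`_k.-1)%:~R / (lead_coef f)%:~R : rat)%:A.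
      have e : ((f`_k.-1)%:~R / (lead_coef f)%:~R : rat)%:A
          = ((f`_k.-1)%:~R : L) / (lead_coef f)%:~R.
        by rewrite !intr_alg -[X in X = _]/(in_alg L _) fmorph_div.
      rewrite e Hc [_ * - _]mulrC mulfK // opprK /S; exact: eq_bigl.
    by rewrite rpredN rpredZ // mem1v.
  have D : \sum_(j < k) (alpha i - alpha j) \in Et.
    apply: rpred_sum => j _.
    have [->|ji] := eqVneq j i; first by rewrite subrr rpred0.
    rewrite -HEt seqv_sub_adjoin // inrs'.
    by apply/existsP; exists i; apply/existsP; exists j; rewrite ji eqxx.
  have Hk : alpha i = (k%:R : rat)^-1 *: (\sum_(j < k) (alpha i - alpha j) + S).
    rewrite sumrB addrNK sumr_const card_ord -scaler_nat scalerA mulVf ?scale1r //.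
    by rewrite pnatr_eq0 -lt0n.
  rewrite Hk rpredZ // rpredD //.
  exact: subvP (sub1v Et) _ S1.
have EEt : (E : {vspace L}) = Et.
  apply/eqP; rewrite eqEsubv; apply/andP; split.
    rewrite -HE; apply/Fadjoin_seqP; split; first exact: sub1v.
    by move=> z; rewrite inrs => /existsP[i /eqP->].
  rewrite -HEt; apply/Fadjoin_seqP; split; first exact: sub1v.
  move=> z; rewrite inrs' => /existsP[i /existsP[j /andP[_ /eqP->]]].
  exact: rpredB.
have -> : E = Et by apply: val_inj.
exact: isog_refl.
Qed.
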